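(* Let $G=(V,E)$ be a simple connected graph with $n=|V|$ vertices and diameter $d=\mathrm{diam}(G)$. Suppose $G$ has a dominating set of size $\gamma$. Then the pebbling number of $G$ satisfies $$f(G) \leq 2^{d+1}\gamma + n - 3\gamma + 1.$$
   Context: A dominating set of $G$ is a set $S\subseteq V$ such that every vertex not in $S$ is adjacent to at least one vertex of $S$. A distribution of pebbles on $G$ is a function $D: V \to \mathbb{N}=\{0,1,2,\dots\}$; its size is $|D|=\sum_{v\in V} D(v)$. A pebbling step removes two pebbles from some vertex and places one pebble on an adjacent vertex. For a root vertex $v$, $D$ is $v$-solvable if, after some finite sequence of pebbling steps starting from $D$, at least one pebble is on $v$; $D$ is solvable if it is $v$-solvable for every $v\in V$. The pebbling number $f(G)$ is the smallest integer $N$ such that every distribution of size $N$ on $G$ is solvable. *)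

(* Defs.v *)
From Stdlib Require Import ClassicalEpsilon Relation_Operators.
From mathcomp Require Import all_boot.
Set Implicit Arguments. Unset Strict Implicit. Unset Printing Implicit Defensive.

Section Graphs.
Variable T : finType.
Implicit Types (e : rel T) (D : {ffun T -> nat}).

Definition decP (P : Prop) : bool :=
  if excluded_middle_informative P then true else false.

(* least natural number satisfying P, or 0 if none exists *)
Definition least (P : nat -> Prop) : nat :=
  match excluded_middle_informative (exists n, decP (P n)) with
  | left H => ex_minn H
  | right _ => 0
  end.

Definition simple_graph e := symmetric e /\ irreflexive e.

Definition connected_graph e := forall x y : T, connect e x y.

Definition gdist e (x y : T) : nat :=
  least (fun k => exists p : seq T, [/\ size p = k, path e x p & last x p = y]).

Definition diam e : nat := \max_(x : T) \max_(y : T) gdist e x y.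

Definition dominating e (S : {set T}) :=
  forall v, v \notin S -> exists2 u, u \in S & e v u.

Definition dsize D : nat := \sum_(v : T) D v.

Definition pebbling_step e D D' :=
  exists u w, [/\ e u w, 2 <= D u &
    D' = [ffun x => (if x == u then D x - 2 else D x) + (if x == w then 1 else 0)]].

Definition reachable e := clos_refl_trans _ (pebbling_step e).

Definition root_solvable e D (v : T) := exists D', reachable e D D' /\ 0 < D' v.

Definition solvable e D := forall v, root_solvable e D v.

Definition pebbling_number e : nat :=
  least (fun N => forall D, dsize D = N -> solvable e D).

End Graphs.

(* Main.v *)
Require Import Defs.
From mathcomp Require Import all_boot.
From Stdlib Require Import ClassicalEpsilon Relation_Operators.
From mathcomp Require Import zify.
Set Implicit Arguments. Unset Strict Implicit. Unset Printing Implicit Defensive.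

Lemma decPP (P : Prop) : Defs.decP P = true <-> P.
Proof. rewrite /Defs.decP; by case: excluded_middle_informative. Qed.

Lemma leastP (P : nat -> Prop) n : P n -> P (least P) /\ least P <= n.
Proof.
move=> Pn; rewrite /least; case: excluded_middle_informative => [H|H]; last first.
  by exfalso; apply: H; exists n; apply/decPP.
case: ex_minnP => m /decPP Hm Hmin; split => //; apply: Hmin; exact/decPP.
Qed.

Lemma rtT (A : Type) (R : A -> A -> Prop) x y z :
  clos_refl_trans A R x y -> clos_refl_trans A R y z -> clos_refl_trans A R x z.
Proof. move=> H1 H2; exact: (rt_trans _ _ x y z H1 H2). Qed.

Section Peb.
Variable T : finType.
Variable e : rel T.
Hypothesis irr : irreflexive e.

Definition moveK (D : {ffun T -> nat}) u w k : {ffun T -> nat} :=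
  [ffun x => (if x == u then D x - k.*2 else D x) + (if x == w then k else 0)].

Lemma moveK_reach (D : {ffun T -> nat}) u w k : e u w -> k.*2 <= D u -> reachable e D (moveK D u w k).
Proof.
move=> euw.
have uw : u != w by apply/eqP => E; rewrite E irr in euw.
elim: k => [|k IH] Hk.
  have -> : moveK D u w 0 = D.
    by apply/ffunP => x; rewrite !ffunE; case: (x == u); case: (x == w); lia.
  exact: rt_refl.
apply: rtT (IH _) _; first lia.
apply: rt_step; exists u, w; split => //.
  rewrite ffunE eqxx (negbTE uw); lia.
apply/ffunP => x; rewrite !ffunE.
case: (x =P u) => [->|xu]; first by rewrite (negbTE uw); lia.
case: (x =P w) => [->|xw]; last lia.
by lia.
Qed.

Lemma path_reach (p : seq T) s (D : {ffun T -> nat}) : path e s p -> 2 ^ size p <= D s ->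
  exists D', reachable e D D' /\ 0 < D' (last s p).
Proof.
elim: p s D => [|x p IH] s D /=.
  by move=> _ H; exists D; split; [exact: rt_refl | rewrite expn0 in H].
move=> /andP[esx pxp] Hs.
have sx : s != x by apply/eqP => E; rewrite E irr in esx.
have H2 : (2 ^ size p).*2 <= D s by rewrite -mul2n -expnS.
have [|D' [R1 R2]] := IH x (moveK D s x (2 ^ size p)) pxp.
  by rewrite ffunE eq_sym (negbTE sx) eqxx; lia.
exists D'; split => //; exact: rtT (moveK_reach esx H2) R1.
Qed.

Lemma collect s (vs : seq T) (D : {ffun T -> nat}) : uniq vs -> s \notin vs ->
  (forall v, v \in vs -> e v s) ->
  exists D', reachable e D D' /\ D s + \sum_(v <- vs) (D v)./2 <= D' s /\
     (forall x, x \notin vs -> x != s -> D' x = D x).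
Proof.
elim: vs D => [|v vs IH] D.
  by move=> _ _ _; exists D; split; [exact: rt_refl | rewrite big_nil addn0].
move=> /andP[vnin u]; rewrite inE negb_or => /andP[sv snin] He.
have [|D1 [R1 [S1 X1]]] := IH D u snin.
  by move=> x hx; apply: He; rewrite inE hx orbT.
have evs : e v s by apply: He; rewrite inE eqxx.
have vs' : v != s by rewrite eq_sym.
have Dv : D1 v = D v by apply: X1.
have H2 : ((D1 v)./2).*2 <= D1 v by lia.
exists (moveK D1 v s (D1 v)./2); split; first exact: rtT R1 (moveK_reach evs H2).
split.
  rewrite big_cons ffunE eqxx (negbTE sv) Dv; lia.
move=> x; rewrite inE negb_or => /andP[xv xvs] xs.
rewrite ffunE (negbTE xv) (negbTE xs) addn0; exact: X1.
Qed.

End Peb.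

Theorem theorem4 (T : finType) (e : rel T) (S : {set T}) :
  simple_graph e -> connected_graph e -> dominating e S ->
  pebbling_number e <= 2 ^ (diam e).+1 * #|S| + #|T| + 1 - 3 * #|S|.
Proof.
move=> [sym irr] conn dom.
set d := diam e.
set f := fun v => if v \in S then v else odflt v [pick u in S | e v u].
have fS : forall v, f v \in S.
  move=> v; rewrite /f; case: ifP => // vS; case: pickP => [u /andP[]//|H].
  have [u uS evu] := dom v (negbT vS); by move: (H u); rewrite uS evu.
have fe : forall v, v \notin S -> e v (f v).
  move=> v vS; rewrite /f (negbTE vS); case: pickP => [u /andP[]//|H].
  have [u uS evu] := dom v vS; by move: (H u); rewrite uS evu.
set C := fun s => [set v | (f v == s) && (v != s)].
have Ce : forall s v, v \in C s -> e v s.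
  move=> s v; rewrite inE => /andP[/eqP fv vs].
  have vS : v \notin S by apply/negP => vS; move: fv; rewrite /f vS => E; rewrite E eqxx in vs.
  by rewrite -fv; apply: fe.
suff HP : forall D : {ffun T -> nat}, dsize D = 2 ^ d.+1 * #|S| + #|T| + 1 - 3 * #|S| -> solvable e D.
  exact: (proj2 (leastP (P := fun N => forall D : {ffun T -> nat}, dsize D = N -> solvable e D) HP)).
move=> D HD r.
case: (boolP [exists s in S, 2 ^ d <= D s + \sum_(v <- enum (C s)) (D v)./2]).
  move=> /exists_inP [s sS Hs].
  have [||D1 [R1 [S1 _]]] := @collect T e irr s (enum (C s)) D (enum_uniq (C s)).
  - by rewrite mem_enum inE eqxx andbF.
  - by move=> v; rewrite mem_enum; apply: Ce.
  have [p ps ->] := connectP (conn s r).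
  have [[q [qs qp ql]] _] := leastP (P := fun k => exists p0 : seq T,
      [/\ size p0 = k, path e s p0 & last s p0 = last s p]) (n := size p)
      (ex_intro _ p (And3 erefl ps erefl)).
  have gd : gdist e s (last s p) <= d.
    rewrite /d /diam; apply: leq_trans (leq_bigmax (F := fun x => \max_(y : T) gdist e x y) s); exact: (leq_bigmax (F := gdist e s) (last s p)).
  have H2 : 2 ^ size q <= D1 s.
    rewrite qs; apply: leq_trans (leq_trans Hs S1); exact: leq_pexp2l.
  have [D' [R2 R3]] := path_reach irr qp H2.
  exists D'; split; [exact: rtT R1 R2 | by rewrite -ql].
move=> /exists_inPn Hno; exfalso.
have hs : forall s, s \in S ->
    D s + \sum_(v in C s) D v + 3 <= 2 ^ d.+1 + (1 + #|C s|).
  move=> s sS; move: (Hno s sS); rewrite -ltnNge big_enum /= => Hlt.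
  have Hle : \sum_(v in C s) D v <= 2 * \sum_(v in C s) (D v)./2 + #|C s|.
    rewrite big_distrr -sum1_card -big_split; apply: leq_sum => v _ /=; lia.
  have : 1 <= 2 ^ d by rewrite expn_gt0.
  rewrite expnS; move: Hle Hlt.
  set h := \sum_(v in C s) (D v)./2; set a := \sum_(v in C s) D v; lia.
pose a := fun s => D s + \sum_(v in C s) D v.
pose b := fun s => 1 + #|C s|.
have Hsum : \sum_(s in S) (a s + 3) <= \sum_(s in S) (2 ^ d.+1 + b s).
  by apply: leq_sum => s sS; apply: hs.
have L1 : \sum_(s in S) (a s + 3) = \sum_(s in S) a s + #|S| * 3.
  by rewrite big_split sum_nat_const.
have L2 : \sum_(s in S) (2 ^ d.+1 + b s) = #|S| * 2 ^ d.+1 + \sum_(s in S) b s.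
  by rewrite big_split sum_nat_const.
rewrite L1 L2 in Hsum.
have E1 : dsize D = \sum_(s in S) (D s + \sum_(v in C s) D v).
  rewrite /dsize (partition_big f (fun s => s \in S)) //=.
  apply: eq_bigr => s sS; rewrite (bigD1 s) /=; last by rewrite /f sS eqxx.
  congr (_ + _); apply: eq_bigl => v; rewrite inE; lia.
have E2 : #|T| = \sum_(s in S) (1 + #|C s|).
  rewrite -sum1_card (partition_big f (fun s => s \in S)) //=.
  apply: eq_bigr => s sS; rewrite (bigD1 s) /=; last by rewrite /f sS eqxx.
  rewrite sum1_card; congr (_ + _); apply: eq_card => v; rewrite !inE; lia.
have cS : #|S| <= #|T| by apply: max_card.
have : 1 <= 2 ^ d by rewrite expn_gt0.
rewrite -E1 -E2 in Hsum; rewrite expnS in Hsum HD *.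
move: Hsum HD cS; set g := #|S|; set n := #|T|; set z := 2 ^ d; nia.
Qed.
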